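(* Let $n\ge2$ and $A,B\in M_n(\mathbb C)$. Then $\mathbb C A=\mathbb C B$ if and only if $({}^\perp A)\cap\mathcal R_1=({}^\perp B)\cap\mathcal R_1$.
   Context: $M_n(\mathbb C)$ carries the operator (spectral) norm. $X\perp Y$ (Birkhoff–James orthogonality) means $\|X+\lambda Y\|\ge\|X\|$ for all $\lambda\in\mathbb C$; ${}^\perp A:=\{X: X\perp A\}$. $\mathcal R_1:=\{X\in M_n(\mathbb C):\mathrm{rk}\,X=1\}$. *)

(* Defs.v *)
From HB Require Import structures.
From mathcomp Require Import all_boot all_order all_algebra.
From mathcomp Require Import complex.
From mathcomp Require Import classical_sets reals.
Set Implicit Arguments. Unset Strict Implicit. Unset Printing Implicit Defensive.
Import Order.TTheory GRing.Theory Num.Theory.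
Local Open Scope ring_scope.
Local Open Scope classical_set_scope.

Definition vnorm (R : realType) (n : nat) (v : 'cV[R[i]]_n) : R :=
  Num.sqrt (\sum_(k < n) ((complex.Re (v k 0)) ^+ 2 + (complex.Im (v k 0)) ^+ 2)).

Definition opnorm (R : realType) (n : nat) (X : 'M[R[i]]_n) : R :=
  sup [set vnorm (X *m v) | v in [set v : 'cV[R[i]]_n | vnorm v <= 1]].

Definition BJorth (R : realType) (n : nat) (X Y : 'M[R[i]]_n) : Prop :=
  forall lam : R[i], opnorm X <= opnorm (X + lam *: Y).

Definition leftperp (R : realType) (n : nat) (A : 'M[R[i]]_n) : set 'M[R[i]]_n :=
  [set X | BJorth X A].

Definition rank_one (R : realType) (n : nat) : set 'M[R[i]]_n :=
  [set X | \rank X = 1%N].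

Definition cline (R : realType) (n : nat) (A : 'M[R[i]]_n) : set 'M[R[i]]_n :=
  [set c *: A | c in [set: R[i]]].

(* Main.v *)
Require Import Defs.
From HB Require Import structures.
From mathcomp Require Import all_boot all_order all_algebra.
From mathcomp Require Import complex.
From mathcomp Require Import boolp classical_sets reals.
From mathcomp Require Import ring lra.
Set Implicit Arguments. Unset Strict Implicit. Unset Printing Implicit Defensive.
Import Order.TTheory GRing.Theory Num.Theory.
Local Open Scope ring_scope.
Local Open Scope complex_scope.
Local Open Scope classical_set_scope.

Section S.
Variable R : realType.
Implicit Types z w a b : R[i].

Definition sq z : R := complex.Re z ^+ 2 + complex.Im z ^+ 2.

Lemma sq_ge0 z : 0 <= sq z.
Proof. by rewrite /sq addr_ge0 // sqr_ge0. Qed.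

Lemma sq_eq0 z : sq z = 0 -> z = 0.
Proof.
case: z => a b; rewrite /sq /= => /eqP; rewrite paddr_eq0 ?sqr_ge0 // !sqrf_eq0.
by case/andP => /eqP -> /eqP ->.
Qed.

Lemma sqM z w : sq (z * w) = sq z * sq w.
Proof. case: z => a b; case: w => c d; rewrite /sq /=; ring. Qed.

Lemma sqJ z : sq (conjc z) = sq z.
Proof. case: z => a b; rewrite /sq /=; ring. Qed.

Lemma sqR (r : R) : sq (r%:C) = r ^+ 2.
Proof. rewrite /sq /=; ring. Qed.

Lemma mulJ z : conjc z * z = (sq z)%:C.
Proof. case: z => a b; rewrite /sq /=; apply/eqP; rewrite eq_complex /=; apply/andP; split; apply/eqP; ring. Qed.

Lemma sqD a b : sq (a + b) = sq a + 2 * complex.Re (conjc a * b) + sq b.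
Proof. case: a => a1 a2; case: b => b1 b2; rewrite /sq /=; ring. Qed.

Lemma ReD a b : complex.Re (a + b) = complex.Re a + complex.Re b.
Proof. by case: a; case: b. Qed.

Lemma ReRM (r : R) z : complex.Re (r%:C * z) = r * complex.Re z.
Proof. case: z => a b /=; ring. Qed.

Lemma ReJM z : complex.Re (conjc z * z) = sq z.
Proof. by rewrite mulJ. Qed.


Lemma ReSum (I : finType) (F : I -> R[i]) :
  complex.Re (\sum_k F k) = \sum_k complex.Re (F k).
Proof. by apply: (big_morph (@complex.Re R) (@ReD)). Qed.

Section Sums.
Variable I : finType.
Implicit Types u v : I -> R[i].
Definition nsq u : R := \sum_k sq (u k).
Definition ip u v : R[i] := \sum_k conjc (u k) * v k.

Lemma nsq_ge0 u : 0 <= nsq u.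
Proof. by apply: sumr_ge0 => k _; apply: sq_ge0. Qed.

Lemma nsq_eq0 u : nsq u = 0 -> forall k, u k = 0.
Proof.
move=> /eqP; rewrite psumr_eq0; last by move=> k _; apply: sq_ge0.
by move=> /allP H k; apply: sq_eq0; apply/eqP; apply: H; rewrite mem_index_enum.
Qed.

Lemma nsqD u v : nsq (fun k => u k + v k) = nsq u + 2 * complex.Re (ip u v) + nsq v.
Proof.
rewrite /nsq /ip ReSum mulr_sumr -!big_split /=; apply: eq_bigr => k _.
by rewrite sqD.
Qed.

Lemma nsqZ c v : nsq (fun k => c * v k) = sq c * nsq v.
Proof. by rewrite /nsq mulr_sumr; apply: eq_bigr => k _; rewrite sqM. Qed.

Lemma ipZ u c v : ip u (fun k => c * v k) = c * ip u v.
Proof. by rewrite /ip mulr_sumr; apply: eq_bigr => k _; rewrite mulrCA. Qed.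

Lemma ipJ u : ip u u = (nsq u)%:C.
Proof.
rewrite /ip /nsq (big_morph (real_complex R) (@rmorphD _ _ _) (@rmorph0 _ _ _)).
by apply: eq_bigr => k _; rewrite mulJ.
Qed.

Lemma CS u v : sq (ip u v) <= nsq u * nsq v.
Proof.
have [V0|Vp] := eqVneq (nsq v) 0.
  have -> : ip u v = 0.
    by rewrite /ip big1 // => k _; rewrite (nsq_eq0 V0) mulr0.
  by rewrite V0 mulr0 /sq /= expr0n /= addr0.
have Vgt : 0 < nsq v by rewrite lt_def Vp nsq_ge0.
pose c := ip u v.
pose lam : R[i] := - (nsq v)^-1%:C * conjc c.
have := nsq_ge0 (fun k => u k + lam * v k).
rewrite nsqD nsqZ ipZ.
have -> : complex.Re (lam * c) = - (nsq v)^-1 * sq c.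
  by rewrite /lam -mulrA mulJ -rmorphN -rmorphM /=.
have -> : sq lam = (nsq v)^-2 * sq c.
  by rewrite /lam sqM sqJ -rmorphN sqR sqrrN exprVn.
move=> H.
have : 0 <= nsq u * nsq v - sq c.
  have E : nsq u * nsq v - sq c = nsq v * (nsq u + 2 * (- (nsq v)^-1 * sq c) + (nsq v)^-2 * sq c * nsq v).
    by field; rewrite Vp.
  by rewrite E mulr_ge0 // ltW.
by rewrite subr_ge0.
Qed.
End Sums.
End S.

Section Op.
Variable R : realType.
Variable n : nat.
Implicit Types M X : 'M[R[i]]_n.
Implicit Types v : 'cV[R[i]]_n.

Definition colf v := fun k => v k 0.
Definition FM M := nsq (fun ij : 'I_n * 'I_n => M ij.1 ij.2).

Lemma vnormE v : vnorm v = Num.sqrt (nsq (colf v)).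
Proof. by []. Qed.

Lemma FM_ge0 M : 0 <= FM M.
Proof. exact: nsq_ge0. Qed.

Lemma OB M v : nsq (colf v) <= 1 -> nsq (colf (M *m v)) <= FM M.
Proof.
move=> Hv.
have E : forall i, (M *m v) i 0 = ip (fun j => conjc (M i j)) (colf v).
  by move=> i; rewrite mxE /ip; apply: eq_bigr => j _; rewrite conjcK.
rewrite /FM /nsq -(pair_bigA _ (fun i j => sq (M i j))) /=.
apply: ler_sum => i _; rewrite /colf E.
apply: (le_trans (CS _ _)).
have -> : nsq (fun j => conjc (M i j)) = \sum_j sq (M i j).
  by apply: eq_bigr => j _; rewrite sqJ.
rewrite -[leRHS]mulr1; apply: ler_wpM2l => //.
by apply: sumr_ge0 => j _; apply: sq_ge0.
Qed.

Lemma ball_le1 v : vnorm v <= 1 -> nsq (colf v) <= 1.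
Proof. by rewrite vnormE -{1}sqrtr1 ler_sqrt. Qed.

Lemma le1_ball v : nsq (colf v) <= 1 -> vnorm v <= 1.
Proof. by move=> H; rewrite vnormE -sqrtr1 ler_sqrt. Qed.

Lemma opnorm_ub M : opnorm M <= Num.sqrt (FM M).
Proof.
apply: ge_sup.
  exists (vnorm (M *m 0)); exists 0 => //=.
  by rewrite /= vnormE /nsq big1 ?sqrtr0 // => k _; rewrite /colf mxE /sq /= !expr0n /= addr0.
move=> x [v /= Hv <-]; rewrite vnormE; apply: ler_wsqrtr; apply: OB.
exact: ball_le1.
Qed.

Lemma opnorm_lb M v : nsq (colf v) <= 1 -> Num.sqrt (nsq (colf (M *m v))) <= opnorm M.
Proof.
move=> Hv; apply: ub_le_sup.
  exists (Num.sqrt (FM M)) => x [w /= Hw <-]; rewrite vnormE; apply: ler_wsqrtr; apply: OB.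
  exact: ball_le1.
by exists v => //=; apply: le1_ball.
Qed.
End Op.

Section R1.
Variable R : realType.
Variable n : nat.
Implicit Types M X : 'M[R[i]]_n.

Lemma ipZl (I : finType) (u v : I -> R[i]) c :
  ip (fun k => c * u k) v = conjc c * ip u v.
Proof. by rewrite /ip mulr_sumr; apply: eq_bigr => k _; rewrite rmorphM mulrA. Qed.

Lemma rank1_dec X : \rank X = 1%N -> exists (c : 'cV[R[i]]_n) (r : 'rV[R[i]]_n), X = c *m r.
Proof.
move=> H; have E := mulmx_base X; move: (col_base X) (row_base X) E.
rewrite H => c r E; by exists c, r.
Qed.

Definition fX X M := ip (fun ij : 'I_n * 'I_n => X ij.1 ij.2) (fun ij => M ij.1 ij.2).

Lemma key X (c : 'cV[R[i]]_n) (r : 'rV[R[i]]_n) : X = c *m r -> X != 0 ->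
  exists v0 : 'cV[R[i]]_n, nsq (colf v0) <= 1 /\
   forall M (lam : R[i]), nsq (colf ((X + lam *: M) *m v0)) =
     FM X + 2 * complex.Re (lam * fX X M) + sq lam * nsq (colf (M *m v0)).
Proof.
move=> EX Xn0.
have Xij : forall i j, X i j = c i 0 * r 0 j.
  by move=> i j; rewrite EX mxE big_ord1.
pose w := fun j => r 0 j.
pose W := nsq w.
have Wgt : 0 < W.
  rewrite lt_def nsq_ge0 andbT; apply/eqP => W0.
  move/eqP: Xn0; apply; apply/matrixP => i j.
  by rewrite Xij mxE (nsq_eq0 W0 j : r 0 j = 0) mulr0.
pose s := Num.sqrt W.
have sgt : 0 < s by rewrite sqrtr_gt0.
have s2 : s ^+ 2 = W by rewrite sqr_sqrtr // ltW.
pose v0 : 'cV[R[i]]_n := \col_j ((s^-1)%:C * conjc (r 0 j)).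
exists v0; split.
  have -> : colf v0 = fun j => (s^-1)%:C * conjc (w j).
    by apply: funext => j; rewrite /colf mxE.
  rewrite nsqZ sqR.
  have -> : nsq (fun j => conjc (w j)) = W.
    by apply: eq_bigr => j _; rewrite sqJ.
  by rewrite exprVn s2 mulVf // gt_eqF.
move=> M lam.
have rv0 : (r *m v0) 0 0 = s%:C.
  rewrite mxE.
  have -> : \sum_j r 0 j * v0 j 0 = (s^-1)%:C * ip w w.
    rewrite /ip mulr_sumr; apply: eq_bigr => j _; rewrite mxE /w.
    by rewrite mulrCA [r 0 j * _]mulrC.
  rewrite ipJ.
  rewrite -rmorphM; congr (_ %:C); rewrite -[nsq w]/W -s2 expr2 mulKf // gt_eqF //.
have Xv0 : forall i, (X *m v0) i 0 = s%:C * c i 0.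
  move=> i; rewrite EX -mulmxA mxE big_ord1 mulrC; congr (_ * _).
  by rewrite rv0.
have -> : colf ((X + lam *: M) *m v0) =
    (fun i => (s%:C * c i 0) + lam * colf (M *m v0) i).
  apply: funext => i; rewrite /colf mulmxDl mxE -Xv0 -scalemxAl mxE.
  by rewrite [X in _ + X = _]mxE.
rewrite nsqD nsqZ ipZ ipZl conjc_real.
have -> : nsq (fun i => s%:C * c i 0) = FM X.
  rewrite nsqZ sqR s2 /FM /nsq -(pair_bigA _ (fun i j => sq (X i j))) /=.
  rewrite mulr_sumr; apply: eq_bigr => i _; rewrite /W /nsq mulr_suml.
  by apply: eq_bigr => j _; rewrite Xij sqM mulrC.
have -> : ip (fun i => c i 0) (colf (M *m v0)) = (s^-1)%:C * fX X M.
  rewrite /fX /ip -(pair_bigA _ (fun i j => conjc (X i j) * M i j)) /= mulr_sumr.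
  apply: eq_bigr => i _; rewrite /colf mxE mulr_sumr mulr_sumr; apply: eq_bigr => j _.
  rewrite mxE Xij rmorphM; ring.
congr (_ + _ * _ + _); congr (complex.Re _).
by rewrite [s%:C * _]mulrA -rmorphM mulfV ?gt_eqF // mul1r.
Qed.

Lemma FM_lin X M (lam : R[i]) :
  FM (X + lam *: M) = FM X + 2 * complex.Re (lam * fX X M) + sq lam * FM M.
Proof.
rewrite /FM /fX -nsqZ -ipZ -nsqD; congr nsq; apply: funext => ij.
by rewrite !mxE.
Qed.

Lemma sq_gt0 (z : R[i]) : z != 0 -> 0 < sq z.
Proof. by move=> nz; rewrite lt_def sq_ge0 andbT; apply/eqP => /sq_eq0 /eqP; rewrite (negbTE nz). Qed.

Lemma charBJ X M : \rank X = 1%N -> (BJorth X M <-> fX X M = 0).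
Proof.
move=> rk; have [c [r EX]] := rank1_dec rk.
have Xn0 : X != 0 by apply/eqP => X0; move: rk; rewrite X0 mxrank0.
have [v0 [Hv0 L]] := key EX Xn0.
have L0 : nsq (colf (X *m v0)) = FM X.
  by have := L M 0; rewrite scale0r addr0 mul0r (_ : sq 0 = 0) ?mul0r ?mulr0 ?addr0 // /sq /= expr0n /= addr0.
have opX : opnorm X = Num.sqrt (FM X).
  apply/le_anti; rewrite opnorm_ub /=; rewrite -L0; exact: opnorm_lb.
split.
- move=> BJ; apply/eqP; apply: contraT => an0.
  set a := fX X M in an0.
  have Gn0 : FM M != 0.
    apply: contra an0 => /eqP G0; apply/eqP; rewrite /a /fX /ip big1 // => ij _.
    by rewrite (nsq_eq0 G0 ij) mulr0.
  have Ggt : 0 < FM M by rewrite lt_def Gn0 FM_ge0.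
  pose lam : R[i] := - ((FM M)^-1)%:C * conjc a.
  have E := FM_lin X M lam.
  have ReE : complex.Re (lam * fX X M) = - (FM M)^-1 * sq a.
    by rewrite /lam -mulrA mulJ -rmorphN -rmorphM /=.
  have sqE : sq lam = (FM M)^-2 * sq a.
    by rewrite /lam sqM sqJ -rmorphN sqR sqrrN exprVn.
  rewrite ReE sqE in E.
  have H1 := BJ lam.
  have H2 := opnorm_ub (X + lam *: M).
  rewrite opX in H1.
  have := le_trans H1 H2; rewrite ler_sqrt ?FM_ge0 // E.
  have sa := sq_gt0 an0.
  have -> : FM X + 2 * (- (FM M)^-1 * sq a) + (FM M)^-2 * sq a * FM M
      = FM X - sq a / FM M.
    by field.
  rewrite -subr_ge0 addrAC subrr add0r oppr_ge0 => H; have : 0 < sq a / FM M by rewrite divr_gt0.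
  by rewrite ltNge H.
- move=> H0 lam; rewrite opX.
  apply: le_trans (opnorm_lb (X + lam *: M) Hv0).
  rewrite ler_sqrt ?nsq_ge0 // L H0 mulr0 /sq /= mulr0 addr0.
  by rewrite lerDl mulr_ge0 ?nsq_ge0 // addr_ge0 // sqr_ge0.
Qed.
End R1.

Section LA.
Variable K : fieldType.
Variable n : nat.
Implicit Types A B M : 'M[K]_n.
Implicit Types a b u v : 'I_n -> K.

Definition g M a b := \sum_i \sum_j a i * M i j * b j.
Definition dl (p : 'I_n) : 'I_n -> K := fun i => (i == p)%:R.

Lemma gDl M a u b z : g M (fun i => a i + z * u i) b = g M a b + z * g M u b.
Proof.
rewrite /g mulr_sumr -big_split; apply: eq_bigr => i _.
rewrite mulr_sumr -big_split; apply: eq_bigr => j _ /=; ring.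
Qed.

Lemma gDr M a b v z : g M a (fun j => b j + z * v j) = g M a b + z * g M a v.
Proof.
rewrite /g mulr_sumr -big_split; apply: eq_bigr => i _.
rewrite mulr_sumr -big_split; apply: eq_bigr => j _ /=; ring.
Qed.

Lemma gdll M p b : g M (dl p) b = \sum_j M p j * b j.
Proof.
rewrite /g (bigD1 p) //= [X in _ + X]big1 ?addr0.
  by apply: eq_bigr => j _; rewrite /dl eqxx mul1r.
move=> i ip; apply: big1 => j _; rewrite /dl.
by rewrite (negbTE ip) !mul0r.
Qed.

Lemma gdl M p q : g M (dl p) (dl q) = M p q.
Proof.
rewrite gdll (bigD1 q) //= [X in _ + X]big1 ?addr0.
  by rewrite /dl eqxx mulr1.
by move=> j jq; rewrite /dl (negbTE jq) mulr0.
Qed.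

Variables A B : 'M[K]_n.
Hypothesis H : forall a b, g A a b = 0 <-> g B a b = 0.

Lemma Gl a b u : g A a b != 0 -> g B u b * g A a b = g B a b * g A u b.
Proof.
move=> nz; have [z0|znz] := eqVneq (g A u b) 0.
  by rewrite z0 (proj1 (H u b) z0) mul0r mulr0.
pose z := - (g A a b) / g A u b.
have : g A (fun i => a i + z * u i) b = 0 by rewrite gDl /z; field.
move/H; rewrite gDl /z => E.
have E2 : g B a b = g A a b / g A u b * g B u b.
  by apply/eqP; rewrite -subr_eq0 -E; apply/eqP; ring.
by rewrite E2; field.
Qed.

Lemma Gr a b v : g A a b != 0 -> g B a v * g A a b = g B a b * g A a v.
Proof.
move=> nz; have [z0|znz] := eqVneq (g A a v) 0.
  by rewrite z0 (proj1 (H a v) z0) mul0r mulr0.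
pose z := - (g A a b) / g A a v.
have : g A a (fun j => b j + z * v j) = 0 by rewrite gDr /z; field.
move/H; rewrite gDr /z => E.
have E2 : g B a b = g A a b / g A a v * g B a v.
  by apply/eqP; rewrite -subr_eq0 -E; apply/eqP; ring.
by rewrite E2; field.
Qed.

Lemma LAmain : (A = 0 /\ B = 0) \/ exists c, c != 0 /\ B = c *: A.
Proof.
case: (boolP [exists p, [exists q, A p q != 0]]) => [/existsP [p /existsP [q Apq]] | ].
  right.
  have Bpq : B p q != 0.
    by apply: contra Apq => /eqP; rewrite -!gdl => /H ->.
  pose c := B p q / A p q.
  have step1 : forall v, g A (dl p) v != 0 -> forall u, g B u v = c * g A u v.
    move=> v nz u.
    have Apq' : g A (dl p) (dl q) != 0 by rewrite gdl.
    have E1 := Gr v Apq'; rewrite !gdl in E1.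
    have E1' : g B (dl p) v = c * g A (dl p) v.
      by apply: (mulIf Apq); rewrite E1 /c mulrAC divfK.
    apply: (mulIf nz); rewrite (Gl u nz) E1'; ring.
  exists c; split; first by rewrite /c mulf_neq0 // invr_eq0.
  apply/matrixP => i j; rewrite mxE.
  pose k : K := if A p j == 0 then 1 else 0.
  have nzv : g A (dl p) (fun j' => dl j j' + k * dl q j') != 0.
    rewrite gDr !gdl /k; case: (eqVneq (A p j) 0) => [->|nz].
      by rewrite add0r mul1r.
    by rewrite mul0r addr0.
  have e1 := step1 _ nzv (dl i).
  have Apq' : g A (dl p) (dl q) != 0 by rewrite gdl.
  have e2 := step1 _ Apq' (dl i).
  rewrite !gDr !gdl in e1; rewrite !gdl in e2; rewrite e2 in e1.
  have -> : B i j = (B i j + k * (c * A i q)) - k * (c * A i q) by ring.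
  rewrite e1; ring.
rewrite negb_exists => /forallP HA; left.
have A0 : A = 0.
  apply/matrixP => p q; rewrite mxE; move: (HA p); rewrite negb_exists => /forallP /(_ q).
  by rewrite negbK => /eqP.
split => //; apply/matrixP => p q; rewrite mxE -gdl; apply/H.
by rewrite gdl A0 mxE.
Qed.
End LA.

Section Fin.
Variable R : realType.
Variable n : nat.
Implicit Types A B M X : 'M[R[i]]_n.

Lemma perp_scale X A (k : R[i]) : BJorth X A -> BJorth X (k *: A).
Proof. by move=> H lam; rewrite scalerA; apply: H. Qed.

Lemma in_cline A B : cline A = cline B -> exists k, A = k *: B.
Proof.
move=> E; have h : cline A A.
  by exists (1 : R[i]); [done | rewrite scale1r].
by rewrite E in h; case: h => k _ <-; exists k.
Qed.

Lemma fwd A B : cline A = cline B ->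
  leftperp A `&` @rank_one R n = leftperp B `&` @rank_one R n.
Proof.
move=> E; have [k Ek] := in_cline E; have [k' Ek'] := in_cline (esym E).
apply/seteqP; split => X [h1 h2]; split; [|exact: h2| |exact: h2].
  rewrite /leftperp /= Ek'; exact: perp_scale.
rewrite /leftperp /= Ek; exact: perp_scale.
Qed.

Lemma gfX M (a b : 'I_n -> R[i]) :
  fX (\matrix_(i, j) (conjc (a i) * conjc (b j))) M = g M a b.
Proof.
rewrite /fX /ip /g -(pair_bigA _ (fun i j => conjc ((\matrix_(i, j) (conjc (a i) * conjc (b j))) i j) * M i j)) /=.
apply: eq_bigr => i _; apply: eq_bigr => j _; rewrite mxE rmorphM /= !conjcK; ring.
Qed.

Lemma rank_outer (a b : 'I_n -> R[i]) i0 j0 : a i0 != 0 -> b j0 != 0 ->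
  \rank (\matrix_(i, j) (conjc (a i) * conjc (b j))) = 1%N.
Proof.
move=> ha hb.
have -> : \matrix_(i, j) (conjc (a i) * conjc (b j)) =
   (\col_i conjc (a i)) *m (\row_j conjc (b j)).
  by apply/matrixP => i j; rewrite !mxE big_ord1 !mxE.
apply/eqP; rewrite eqn_leq; apply/andP; split.
  exact: leq_trans (mxrankM_maxl _ _) (rank_leq_col _).
rewrite lt0n mxrank_eq0; apply/eqP => /matrixP /(_ i0 j0).
rewrite !mxE big_ord1 !mxE => /eqP; rewrite mulf_eq0 !conjc_eq0.
by rewrite (negbTE ha) (negbTE hb).
Qed.

Lemma bwd A B :
  leftperp A `&` @rank_one R n = leftperp B `&` @rank_one R n -> cline A = cline B.
Proof.
move=> E.
have H : forall a b, g A a b = 0 <-> g B a b = 0.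
  move=> a b.
  case: (boolP [exists i, a i != 0]) => [/existsP [i0 ha]|]; last first.
    rewrite negb_exists => /forallP Ha.
    have z : forall M, g M a b = 0.
      move=> M; apply: big1 => i _; apply: big1 => j _.
      by move: (Ha i); rewrite negbK => /eqP ->; rewrite !mul0r.
    rewrite (z A) (z B); split => _; reflexivity.
  case: (boolP [exists j, b j != 0]) => [/existsP [j0 hb]|]; last first.
    rewrite negb_exists => /forallP Hb.
    have z : forall M, g M a b = 0.
      move=> M; apply: big1 => i _; apply: big1 => j _.
      by move: (Hb j); rewrite negbK => /eqP ->; rewrite !mulr0.
    rewrite (z A) (z B); split => _; reflexivity.
  have rk := rank_outer ha hb.
  set X := \matrix_(i, j) _ in rk.
  rewrite -(gfX A) -(gfX B) -(charBJ A rk) -(charBJ B rk).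
  split => h.
    have h' : (leftperp A `&` @rank_one R n) X by split; [exact: h | exact: rk].
    rewrite E in h'; case: h' => h1 _; exact: h1.
  have h' : (leftperp B `&` @rank_one R n) X by split; [exact: h | exact: rk].
  rewrite -E in h'; case: h' => h1 _; exact: h1.
case: (LAmain H) => [[-> ->] | [c [cn0 ->]]]; first by [].
apply/seteqP; split => x [k _ <-].
  exists (k / c); first by [].
  by rewrite scalerA divfK.
exists (k * c); first by [].
by rewrite scalerA.
Qed.
End Fin.

Unset Implicit Arguments.
Theorem lemma3p7 (R : realType) (n : nat) (hn : (2 <= n)%N)
    (A B : 'M[R[i]]_n) :
  cline A = cline B <->
  leftperp A `&` @rank_one R n = leftperp B `&` @rank_one R n.
Proof. by split; [apply: fwd | apply: bwd]. Qed.
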